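(* Let $r$ be a prime power, $q=r^2$, and let $M$ be a positive integer with $M\mid(r+1)$. If there exist Hermitian self-orthogonal linear codes over $\mathbb{F}_q$ with parameters $[m,k_1,d_1]_q,[m,k_2,d_2]_q,\dots,[m,k_M,d_M]_q$, then there exists a Hermitian self-orthogonal linear code over $\mathbb{F}_q$ with parameters $[Mm,k_1+k_2+\cdots+k_M,d]_q$ where $d\ge\min\{Md_1,(M-1)d_2,\dots,d_M\}$ (i.e., $d\ge\min_{1\le i\le M}(M-i+1)d_i$).
   Context: For $a\in\mathbb{F}_q$, $\overline{a}:=a^r$. The Hermitian inner product on $\mathbb{F}_q^n$ is $\langle u,v\rangle_H=\sum_i u_i\overline{v_i}$; a linear code $C$ is Hermitian self-orthogonal if $C\subseteq C^{\perp_H}$. A code with parameters $[n,k,d]_q$ is a linear code of length $n$, dimension $k$ and minimum Hamming weight $d$ over $\mathbb{F}_q$. *)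

(* Defs.v *)
From HB Require Import structures.
From mathcomp Require Import all_boot all_order all_algebra all_field.
Set Implicit Arguments. Unset Strict Implicit. Unset Printing Implicit Defensive.
Import GRing.Theory.
Local Open Scope ring_scope.

Definition prime_power (r : nat) : Prop :=
  exists p e : nat, prime p /\ (0 < e)%N /\ r = (p ^ e)%N.

(* Hermitian inner product on F^n, conjugation a |-> a^r (F has r^2 elements) *)
Definition herm_ip (F : fieldType) (r n : nat) (u v : 'rV[F]_n) : F :=
  \sum_(i < n) u 0 i * (v 0 i) ^+ r.

Definition herm_self_orth (F : fieldType) (r n : nat) (C : {vspace 'rV[F]_n}) : Prop :=
  forall u v, u \in C -> v \in C -> herm_ip r u v = 0.

Definition wt (F : fieldType) (n : nat) (u : 'rV[F]_n) : nat :=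
  #|[set i : 'I_n | u 0 i != 0]|.

Definition min_dist (F : fieldType) (n : nat) (C : {vspace 'rV[F]_n}) (d : nat) : Prop :=
  (exists2 c, c \in C & (c != 0) && (wt c == d)) /\
  (forall c, c \in C -> c != 0 -> (d <= wt c)%N).

Definition code_params (F : fieldType) (n : nat) (C : {vspace 'rV[F]_n}) (k d : nat) : Prop :=
  \dim C = k /\ min_dist C d.

(* Main.v *)
Require Import Defs.
From HB Require Import structures.
From mathcomp Require Import all_boot all_order all_algebra all_field all_fingroup all_solvable.
Set Implicit Arguments. Unset Strict Implicit. Unset Printing Implicit Defensive.
Import GRing.Theory.
Local Open Scope ring_scope.

Definition blk (F : fieldType) (M m : nat) (a : 'I_M -> F) (c : 'rV[F]_m) : 'rV[F]_(M * m) :=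
  mxvec (\matrix_(l, p) (a l * c 0 p)).

Fact blk_is_semilinear (F : fieldType) (M m : nat) (a : 'I_M -> F) : semilinear (@blk F M m a).
Proof.
split=> [k c|c1 c2]; rewrite /blk -?linearZ -?linearD /=; congr mxvec;
  by apply/matrixP=> l p; rewrite !mxE ?mulrDr // mulrCA.
Qed.

HB.instance Definition _ (F : fieldType) (M m : nat) (a : 'I_M -> F) :=
  GRing.isSemilinear.Build F 'rV[F]_m 'rV[F]_(M * m) _ (@blk F M m a) (@blk_is_semilinear F M m a).

Lemma blk_sumE (F : fieldType) (M m : nat) (a : 'I_M -> 'I_M -> F) (c : 'I_M -> 'rV[F]_m) l p :
  (\sum_j blk (a j) (c j)) 0 (mxvec_index l p) = \sum_j a j l * c j 0 p.
Proof. by rewrite summxE; apply: eq_bigr => j _; rewrite mxvecE mxE. Qed.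

Lemma wt_mxvec (F : fieldType) (M m : nat) (x : 'rV[F]_(M * m)) :
  wt x = (\sum_(p < m) #|[set l : 'I_M | x ord0 (mxvec_index l p) != 0%R]|)%N.
Proof.
rewrite /wt -sum1_card.
rewrite big_mkcond (reindex _ (curry_mxvec_bij M m)) /=.
under [RHS]eq_bigr do rewrite -sum1_card big_mkcond /=.
rewrite exchange_big pair_big /=.
apply: eq_bigr => -[l p] _ /=; rewrite !inE.
by [].
Qed.

From mathcomp Require Import zify.

Lemma z_inj (F : fieldType) (M : nat) (z : F) (hz : forall k, (z ^+ k == 1) = (M.+1 %| k)%N) :
  injective (fun l : 'I_M.+1 => z ^+ l).
Proof.
have z0 : z != 0.
  apply/eqP=> e; have := hz M.+1; rewrite dvdnn e expr0n /= eq_sym oner_eq0.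
  by [].
suff H : forall a b : 'I_M.+1, (a <= b)%N -> z ^+ a = z ^+ b -> a = b.
  move=> a b e /=; case: (leqP a b) => hab; first exact: H.
  by apply/esym/H => //; apply: ltnW.
move=> a b hab e; apply/val_inj/eqP => /=.
move: e; rewrite -(subnKC hab) exprD -{1}[z ^+ a]mulr1 => /mulfI.
rewrite expf_neq0 // => /(_ isT) /esym /eqP; rewrite hz.
have : (b - a < M.+1)%N by have := ltn_ord b; lia.
case: (b - a)%N => [|k] hk; first by rewrite addn0.
by move/(dvdn_leq (ltn0Sn k)); lia.
Qed.

Lemma few_zeros (F : fieldType) (M : nat) (z : F) (hz : forall k, (z ^+ k == 1) = (M.+1 %| k)%N)
  (b : 'I_M.+1 -> F) (t : 'I_M.+1) (bt : b t != 0) (bz : forall j : 'I_M.+1, (t < j)%N -> b j = 0) :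
  (M.+1 - t <= #|[set l : 'I_M.+1 | (\sum_(j < M.+1) z ^+ (l * j)%N * b j)%R != 0%R]|)%N.
Proof.
pose P := \poly_(i < M.+1) b (inord i).
have Pt : P`_t = b t by rewrite coef_poly ltn_ord inord_val.
have P0 : P != 0 by apply/eqP=> h; move: bt; rewrite -Pt h coef0 eqxx.
have sP : (size P <= t.+1)%N.
  apply/leq_sizeP => j hj; rewrite coef_poly; case: ifP => // hjM.
  by apply: bz; rewrite inordK.
have ev (l : 'I_M.+1) : P.[z ^+ l] = \sum_(j < M.+1) z ^+ (l * j)%N * b j.
  by rewrite horner_poly; apply: eq_bigr => j _; rewrite inord_val mulrC exprM.
set S := [set l | _].
have hS : (#|~: S| <= t)%N.
  pose rs := [seq z ^+ (val l) | l <- enum (~: S)].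
  have : (size rs < size P)%N.
    apply: max_poly_roots => //.
      apply/allP=> y /mapP[l]; rewrite mem_enum !inE negbK => hl ->.
      by rewrite /root ev.
    rewrite map_inj_uniq ?enum_uniq //; exact: z_inj.
  by rewrite size_map -cardE => h; rewrite -ltnS; exact: leq_trans h sP.
have := cardsC S; rewrite card_ord; lia.
Qed.

Definition vd (F : fieldType) (M m : nat) (z : F) (c : 'I_M -> 'rV[F]_m) : 'rV[F]_(M * m) :=
  \sum_(j < M) blk (fun l : 'I_M => z ^+ (l * j)%N) (c j).

Lemma key (F : fieldType) (M m : nat) (z : F) (hz : forall k, (z ^+ k == 1) = (M.+1 %| k)%N)
  (c : 'I_M.+1 -> 'rV[F]_m) (j0 : 'I_M.+1) (hj0 : c j0 != 0) :
  exists2 t : 'I_M.+1, c t != 0 & ((M.+1 - t) * wt (c t) <= wt (vd z c))%N.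
Proof.
case: (@arg_maxnP _ j0 (fun j => c j != 0) (fun j => val j) hj0) => t ht tmax.
exists t => //.
rewrite wt_mxvec /wt -sum1_card big_distrr /= big_mkcond /=.
apply: leq_sum => p _; rewrite inE; case: ifP => // hp; rewrite muln1.
have -> : [set l : 'I_M.+1 | vd z c ord0 (mxvec_index l p) != 0] =
          [set l : 'I_M.+1 | (\sum_(j < M.+1) z ^+ (l * j)%N * c j 0 p) != 0].
  apply/setP => l; rewrite !inE /vd summxE.
  by congr (_ != _); apply: eq_bigr => j _; rewrite mxvecE mxE.
apply: few_zeros => // j hj.
apply/eqP; apply: contraTT hj => hj; rewrite -leqNgt; apply: tmax.
by apply: contraNN hj => /eqP ->; rewrite mxE.
Qed.

Lemma not_dvd (M r j j' : nat) : (M %| r.+1)%N -> (j < M)%N -> (j' < M)%N -> j != j' ->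
  ~~ (M %| j + j' * r)%N.
Proof.
move=> /dvdnP[q hq] hj hj' ne; apply/negP => /dvdnP[k hk].
have e1 : (j + j' * r + j' = k * M + j')%N by rewrite hk.
have e2 : (j + j' * r + j' = (j' * q) * M + j)%N.
  by rewrite -addnA -{2}[j']muln1 -mulnDr addn1 hq mulnA addnC.
have : ((k * M + j') %% M = ((j' * q) * M + j) %% M)%N by rewrite -e1 -e2.
by rewrite !modnMDl !modn_small // => /eqP; rewrite eq_sym (negPf ne).
Qed.

Lemma geo0 (F : fieldType) (M : nat) (w : F) : w ^+ M = 1 -> w != 1 -> \sum_(l < M) w ^+ l = 0.
Proof.
move=> h1 h2; have := subrX1 w M; rewrite h1 subrr => /esym /eqP.
by rewrite mulf_eq0 subr_eq0 (negPf h2) => /eqP.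
Qed.

Lemma herm_vd (F : fieldType) (r M m : nat) (z : F)
  (frob : forall a b : F, (a + b) ^+ r = a ^+ r + b ^+ r) (r0 : (0 < r)%N)
  (hz : forall k, (z ^+ k == 1) = (M %| k)%N) (hMr : (M %| r.+1)%N)
  (c c' : 'I_M -> 'rV[F]_m) (hc : forall j, herm_ip r (c j) (c' j) = 0) :
  herm_ip r (vd z c) (vd z c') = 0.
Proof.
have fsum : forall (I : finType) (f : I -> F), (\sum_i f i) ^+ r = \sum_i f i ^+ r.
  move=> I f; apply: (big_morph (fun x : F => x ^+ r)) => //.
  by rewrite expr0n; case: r r0 {frob hMr hc}.
have ent (d : 'I_M -> 'rV[F]_m) l p : vd z d 0 (mxvec_index l p) = \sum_(j < M) z ^+ (l * j)%N * d j 0 p.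
  by rewrite /vd summxE; apply: eq_bigr => j _; rewrite mxvecE mxE.
rewrite /herm_ip (reindex _ (curry_mxvec_bij M m)) /=.
have -> : \sum_j vd z c 0 (uncurry (@mxvec_index M m) j) * vd z c' 0 (uncurry (@mxvec_index M m) j) ^+ r
  = \sum_(l < M) \sum_(p < m) vd z c 0 (mxvec_index l p) * vd z c' 0 (mxvec_index l p) ^+ r.
  by rewrite pair_bigA; apply: eq_bigr => -[l p] _.
transitivity (\sum_(j < M) \sum_(j' < M) ((\sum_(l < M) z ^+ (l * j)%N * (z ^+ (l * j')%N) ^+ r) * herm_ip r (c j) (c' j'))).
  under eq_bigr do under eq_bigr do rewrite !ent fsum big_distrlr /=.
  under [RHS]eq_bigr do under eq_bigr do rewrite /herm_ip big_distrlr /=.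
  under [LHS]eq_bigr do rewrite exchange_big.
  under [LHS]eq_bigr do under eq_bigr do rewrite exchange_big.
  rewrite [LHS]exchange_big.
  under [LHS]eq_bigr do rewrite exchange_big.
  apply: eq_bigr => j _; apply: eq_bigr => j' _; apply: eq_bigr => l _; apply: eq_bigr => p _.
  by rewrite exprMn mulrACA.
rewrite big1 // => j _; rewrite big1 // => j' _.
case: (eqVneq j j') => [<-|ne]; first by rewrite hc mulr0.
rewrite (eq_bigr (fun l : 'I_M => (z ^+ (j + j' * r)) ^+ l)); last first.
  move=> l _; rewrite -exprM -exprD -exprM; congr (z ^+ _); lia.
rewrite geo0 ?mul0r //.
  by apply/eqP; rewrite -exprM hz dvdn_mull.
rewrite hz; apply: not_dvd => //.
Qed.

Lemma frob_add (F : finFieldType) (r : nat) : prime_power r -> #|F| = (r ^ 2)%N ->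
  forall a b : F, (a + b) ^+ r = a ^+ r + b ^+ r.
Proof.
move=> [p [e [pp [e0 ->]]]] hF a b.
have pc : p \in [pchar F] by apply: (@card_finPcharP _ p (e * 2)); rewrite // hF expnM.
apply: exprDn_pchar; rewrite pnatX (pnatE _ pp) pc.
by rewrite orbC; case: e {hF} e0.
Qed.

Lemma pp_pos r : prime_power r -> (0 < r)%N.
Proof. by move=> [p [e [pp [e0 ->]]]]; rewrite expn_gt0 prime_gt0. Qed.

Lemma dvd_card (r M : nat) : (M %| r.+1)%N -> (M %| (r ^ 2).-1)%N.
Proof.
move=> h; apply: (dvdn_trans h).
have -> : (r ^ 2).-1 = (r.+1 * r.-1)%N by case: r {h} => [|r] //=; lia.
exact: dvdn_mulr.
Qed.
Lemma exists_root (F : finFieldType) (M : nat) : (M %| #|F|.-1)%N ->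
  exists z : F, forall k, (z ^+ k == 1) = (M %| k)%N.
Proof.
move=> hM.
have /cyclicP[g Hg] := field_unit_group_cyclic [set: {unit F}]%G.
have og : #[g]%g = #|F|.-1 by rewrite /order -Hg card_finField_unit.
have Fgt1 := finNzRing_gt1 F.
set n := (#|F|.-1 %/ M)%N.
have hnM : (n * M = #|F|.-1)%N by rewrite divnK.
have n0 : (0 < n)%N.
  rewrite lt0n; apply/eqP=> n0; move: hnM; rewrite n0 mul0n => h.
  by have := ltn_predK Fgt1; rewrite -h => e; rewrite -e in Fgt1.
exists (val (g ^+ n)%g) => k.
rewrite -FinRing.val_unitX -FinRing.val_unit1 val_eqE -order_dvdn orderXdiv.
  by rewrite og -hnM mulKn.
by rewrite og -hnM dvdn_mulr.
Qed.

Lemma wt_pos (F : fieldType) (n : nat) (c : 'rV[F]_n) : c != 0 -> (0 < wt c)%N.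
Proof.
move=> hc; rewrite /wt lt0n cards_eq0; apply: contraNneq hc => h; apply/eqP/rowP => i.
rewrite mxE; apply/eqP; apply: contraT => hi.
have : i \in [set i | c 0 i != 0] by rewrite inE.
by rewrite h inE.
Qed.

Theorem corollary4p2 (F : finFieldType) (r : nat) (hr : prime_power r)
  (hq : #|F| = (r ^ 2)%N) (M m : nat) (hM : (0 < M)%N) (hMr : (M %| r.+1)%N)
  (k d : 'I_M -> nat) (C : 'I_M -> {vspace 'rV[F]_m})
  (hC : forall i, herm_self_orth r (C i) /\ code_params (C i) (k i) (d i)) :
  exists (D : {vspace 'rV[F]_(M * m)}) (dD : nat),
    herm_self_orth r D /\ code_params D (\sum_(i < M) k i)%N dD /\
    (exists i : 'I_M, ((M - i) * d i <= dD)%N).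
Proof.
case: M hM hMr k d C hC => [//|M] _ hMr k d C hC.
have [z hz] : exists z : F, forall k, (z ^+ k == 1) = (M.+1 %| k)%N.
  by apply: exists_root; rewrite hq; exact: dvd_card.
have frob := frob_add hr hq.
have r0 := pp_pos hr.
pose a (j : 'I_M.+1) := fun l : 'I_M.+1 => z ^+ (l * j)%N.
pose fj (j : 'I_M.+1) := linfun (@blk F M.+1 m (a j)).
pose D := (\sum_(j < M.+1) (fj j @: C j))%VS.
have decomp : forall x, x \in D -> exists c, (forall j, c j \in C j) /\ x = vd z c.
  move=> x /memv_sumP[vs hvs ->].
  have : forall j, exists c, c \in C j /\ vs j = blk (a j) c.
    by move=> j; have /memv_imgP[c hc ->] := hvs j isT; exists c; rewrite lfunE.
  case/fin_all_exists => c hc; exists c; split=> [j|]; first by case: (hc j).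
  by rewrite /vd; apply: eq_bigr => j _; case: (hc j).
have zero : forall c : 'I_M.+1 -> 'rV[F]_m, vd z c = 0 -> forall j, c j = 0.
  move=> c h j; apply/eqP; apply: contraT => hj.
  have [t ht hle] := key hz hj; rewrite h in hle.
  have : (0 < (M.+1 - t) * wt (c t))%N by rewrite muln_gt0 subn_gt0 ltn_ord wt_pos.
  have e0 : wt (0 : 'rV[F]_(M.+1 * m)) = 0%N.
    rewrite /wt; apply/eqP; rewrite cards_eq0; apply/eqP/setP => i.
    by rewrite !inE mxE eqxx.
  by rewrite e0 in hle; move=> /leq_trans /(_ hle); rewrite ltnn.
have dxD : directv D.
  apply/directv_sum_independent => us hus hsum j _.
  have : forall j, exists c, c \in C j /\ us j = blk (a j) c.
    by move=> j'; have /memv_imgP[c hc ->] := hus j' isT; exists c; rewrite lfunE.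
  case/fin_all_exists => c hc.
  have hv : vd z c = 0.
    by rewrite -hsum /vd; apply: eq_bigr => j' _; case: (hc j').
  by case: (hc j) => _ ->; rewrite (zero c hv j) linear0.
have dimD : \dim D = (\sum_(i < M.+1) k i)%N.
  rewrite (directvP dxD) /=; apply: eq_bigr => j _.
  rewrite limg_dim_eq; first by case: (hC j) => _ [].
  suff /eqP -> : lker (fj j) == 0%VS by rewrite capv0.
  apply/lker0P => c1 c2; rewrite !lfunE => e; apply/rowP => p.
  have := congr1 (fun x : 'rV_(M.+1 * m) => x 0 (mxvec_index ord0 p)) e.
  by rewrite /= /blk !mxvecE !mxE /a mul0n expr0 !mul1r.
have [w0 w0C w0nz] : exists2 w0, w0 \in C ord0 & w0 != 0.
  case: (hC ord0) => _ [_ [[w hw /andP[hw0 _]] _]]; by exists w.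
pose c0 (j : 'I_M.+1) := if j == ord0 then w0 else 0.
have c0D : vd z c0 \in D.
  rewrite /vd; apply: memv_sumr => j _; rewrite -lfunE; apply: memv_img.
  by rewrite /c0; case: eqP => [->|_]; rewrite ?mem0v.
have c0nz : vd z c0 != 0.
  by apply/eqP => /zero /(_ ord0); rewrite /c0 eqxx; apply/eqP.
pose P n := [exists x : 'rV[F]_(M.+1 * m), (x \in D) && (x != 0) && (wt x == n)].
have exP : exists n, P n.
  by exists (wt (vd z c0)); apply/existsP; exists (vd z c0); rewrite c0D c0nz eqxx.
case: (ex_minnP exP) => dD /existsP[x /andP[/andP[xD xnz] /eqP wx]] hmin.
exists D, dD; split; last split.
- move=> u v /decomp[c [hc ->]] /decomp[c' [hc' ->]].
  apply: herm_vd => // j.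
  by case: (hC j) => hso _; apply: hso.
- split => //; split; first by exists x => //; rewrite xnz wx eqxx.
  move=> y yD ynz; apply: hmin; apply/existsP; exists y.
  by rewrite yD ynz eqxx.
- have [c [hc xe]] := decomp x xD.
  have [j0 hj0] : exists j0, c j0 != 0.
    case: (boolP [exists j, c j != 0]) => [/existsP//|/existsPn h].
    move: xnz; rewrite xe /vd big1 ?eqxx // => j _.
    by move/negPn/eqP: (h j) => ->; rewrite linear0.
  have [t ht hle] := key hz hj0.
  exists t; rewrite -wx xe; apply: leq_trans hle; rewrite leq_mul2l; apply/orP; right.
  by case: (hC t) => _ [_ [_ hmd]]; apply: hmd.
Qed.
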